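(* Let $(a_n(q))$ be a $q$-Euler–Gauss sequence and $N\ge1$ an integer. If $a_d(1)\neq0$ for every divisor $d$ of $N$ such that $N/d$ is not a prime power, then $\sum_{d\mid N}\mu(d)\,a_{N/d}(q^d)\equiv0\pmod{[N]_q}$.
   Context: $\mu$ is the Möbius function, $[n]_q=1+q+\dots+q^{n-1}$; polynomial congruences modulo $[n]_q$ mean divisibility of the difference by $[n]_q$ in $\mathbb{Z}[q]$. A sequence $(a_n(q))$ in $\mathbb{Z}[q]$ is a $q$-Euler–Gauss sequence if for all $n\ge1$, $\prod_{d\mid n,\,\mu(d)=1}a_{n/d}(q^d)\equiv\prod_{d\mid n,\,\mu(d)=-1}a_{n/d}(q^d)\pmod{[n]_q}$. ''$N/d$ is not a prime power'' means $N/d$ has at least two distinct prime divisors ($1=p^0$ counts as a prime power). *)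

(* Defs.v *)
From mathcomp Require Import all_boot all_order all_algebra.
Set Implicit Arguments. Unset Strict Implicit. Unset Printing Implicit Defensive.
Import GRing.Theory.
Local Open Scope ring_scope.

(* Moebius function on positive naturals (value at 0 irrelevant, set to 0). *)
Definition mobius (n : nat) : int :=
  if (n == 0)%N then 0
  else if [exists p : 'I_n.+1, prime p && (p * p %| n)%N] then 0
  else (-1) ^+ size (primes n).

Definition qint (n : nat) : {poly int} := \sum_(i < n) 'X^i.

Definition zdvdp (p f : {poly int}) : Prop := exists r : {poly int}, f = r * p.

Definition subs_pow (a : {poly int}) (d : nat) : {poly int} := a \Po 'X^d.

Definition qEulerGauss (a : nat -> {poly int}) : Prop :=
  forall n : nat, (0 < n)%N ->
    zdvdp (qint n)
      (\prod_(d <- divisors n | mobius d == 1) subs_pow (a (n %/ d)%N) d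
       - \prod_(d <- divisors n | mobius d == -1) subs_pow (a (n %/ d)%N) d).

(* m is a prime power (1 = p^0 counts) iff it has at most one prime divisor *)
Definition is_prime_power (m : nat) : bool := (0 < m)%N && (size (primes m) <= 1)%N.

(* Main.v *)
Require Import Defs.
From mathcomp Require Import all_boot all_order all_algebra all_field.
Import GRing.Theory Num.Theory.
Set Implicit Arguments. Unset Strict Implicit.
Local Open Scope ring_scope.

Lemma size_qint n : (size (qint n) <= n)%N.
Proof.
elim: n => [|n IH]; first by rewrite /qint big_ord0 size_poly0.
rewrite /qint big_ord_recr /= -/(qint n).
apply: (leq_trans (size_polyD _ _)); rewrite geq_max size_polyXn leqnn andbT.
exact: (leq_trans IH).
Qed.

Lemma qint_monic {n} : (0 < n)%N -> qint n \is monic.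
Proof.
case: n => // n _; rewrite /qint big_ord_recr /= -/(qint n).
apply/monicP; rewrite addrC lead_coefDl ?lead_coefXn //.
by rewrite size_polyXn ltnS size_qint.
Qed.

Lemma size_qint_eq n : size (qint n) = n.
Proof.
case: n => [|n]; first by rewrite /qint big_ord0 size_poly0.
rewrite /qint big_ord_recr /= -/(qint n) addrC size_polyDl size_polyXn //.
by rewrite ltnS size_qint.
Qed.

Lemma qint_root n (z : algC) : z ^+ n = 1 -> z != 1 ->
  (map_poly intr (qint n)).[z] = 0.
Proof.
move=> zn z1; rewrite /qint rmorph_sum horner_sum.
under eq_bigr do rewrite rmorphXn /= map_polyX hornerXn.
have : (z - 1) * \sum_(i < n) z ^+ i = 0 by rewrite -subrX1 zn subrr.
by move/eqP; rewrite mulf_eq0 subr_eq0 (negPf z1) => /eqP.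
Qed.

Lemma dvd_crit (f : {poly int}) n : (0 < n)%N ->
  (forall z : algC, z ^+ n = 1 -> z != 1 -> (map_poly intr f).[z] = 0) ->
  zdvdp (qint n) f.
Proof.
move=> n0 H; have mq := qint_monic n0.
exists (Pdiv.Ring.rdivp f (qint n)).
have E := Pdiv.RingMonic.rdivp_eq mq f.
suff r0 : Pdiv.Ring.rmodp f (qint n) = 0 by rewrite {1}E r0 addr0.
set r := Pdiv.Ring.rmodp f (qint n).
have sr : (size r < n)%N by rewrite -{1}(size_qint_eq n) Pdiv.Ring.ltn_rmodpN0 ?monic_neq0.
have [z pz] := C_prim_root_exists n0.
pose rs := [seq z ^+ k | k <- iota 1 n.-1].
have : map_poly intr r = 0 :> {poly algC}.
  apply: (roots_geq_poly_eq0 (rs := rs)).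
  - apply/allP => w /mapP [k]; rewrite mem_iota => /andP [k1 kn] ->.
    have wn : (z ^+ k) ^+ n = 1 by rewrite -exprM mulnC exprM (prim_expr_order pz) expr1n.
    have w1 : z ^+ k != 1.
      rewrite -(expr0 z) (eq_prim_root_expr pz) mod0n modn_small //.
        by rewrite -lt0n.
      by rewrite (leq_trans kn) // add1n prednK.
    move: (H _ wn w1); rewrite /root {1}E rmorphD rmorphM /= !hornerE qint_root //.
    by rewrite mulr0 add0r => ->.
  - rewrite map_inj_in_uniq ?iota_uniq // => i j; rewrite !mem_iota => /andP [i1 ik] /andP [j1 jk].
    move/eqP; rewrite (eq_prim_root_expr pz) !modn_small //.
      by move/eqP.
    by rewrite (leq_trans jk) // add1n prednK.
    by rewrite (leq_trans ik) // add1n prednK.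
  - rewrite size_map size_iota size_map_inj_poly //; first by rewrite -ltnS prednK.
    exact: intr_inj.
move/eqP; rewrite -size_poly_eq0 size_map_inj_poly //; last exact: intr_inj.
by rewrite size_poly_eq0 => /eqP.
Qed.


Lemma sqP n : (0 < n)%N -> reflect (exists p, prime p && (p * p %| n)%N)
   [exists p : 'I_n.+1, prime p && (p * p %| n)%N].
Proof.
move=> n0; apply: (iffP existsP) => [[p Hp]|[p /andP [pp Hp]]]; first by exists p.
have pn : (p < n.+1)%N.
  rewrite ltnS (leq_trans _ (dvdn_leq _ Hp)) //.
  by rewrite leq_pmulr // prime_gt0.
by exists (Ordinal pn); rewrite pp Hp.
Qed.

Lemma mob_gt0 n : mobius n != 0 -> (0 < n)%N.
Proof. by rewrite /mobius; case: n. Qed.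

Lemma mob_sq n p : mobius n != 0 -> prime p -> ~~ (p * p %| n)%N.
Proof.
move=> mn pp; have n0 := mob_gt0 mn; apply/negP => H; move: mn.
rewrite /mobius (negPf (lt0n_neq0 n0)) /=.
by case: (sqP n0) => // - []; exists p; rewrite pp.
Qed.

Lemma mob_val n : mobius n != 0 -> mobius n = (-1) ^+ size (primes n).
Proof.
move=> mn; have n0 := mob_gt0 mn; move: mn.
by rewrite /mobius (negPf (lt0n_neq0 n0)) /=; case: (sqP n0).
Qed.

Lemma mob_sqf n : (0 < n)%N -> (forall p, prime p -> ~~ (p * p %| n)%N) ->
  mobius n = (-1) ^+ size (primes n).
Proof.
move=> n0 H; rewrite /mobius (negPf (lt0n_neq0 n0)) /=; case: (sqP n0) => // [[p /andP [pp pn]]].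
by move: (H p pp); rewrite pn.
Qed.

Lemma size_primesMp d p : (0 < d)%N -> prime p -> ~~ (p %| d)%N ->
  size (primes (d * p)) = (size (primes d)).+1.
Proof.
move=> d0 pp pd.
change (size (primes (d * p)) = size (p :: primes d)).
apply: perm_size; apply: uniq_perm; first exact: primes_uniq.
  by rewrite /= primes_uniq andbT mem_primes pp d0 /=.
move=> x; rewrite (primesM _ d0 (prime_gt0 pp)) (primes_prime pp) !in_cons in_nil.
by case: (x == p); rewrite ?orbT ?orbF.
Qed.

Lemma mob_mulp d p : (0 < d)%N -> prime p -> ~~ (p %| d)%N ->
  mobius (d * p) = - mobius d.
Proof.
move=> d0 pp pd.
have key : forall r, prime r -> (r * r %| d * p)%N -> (r * r %| d)%N.
  move=> r rp; have [->|rnp] := eqVneq r p.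
    by rewrite dvdn_pmul2r ?prime_gt0 // => H; rewrite H in pd.
  rewrite Gauss_dvdl // coprimeMl !prime_coprime // dvdn_prime2 //.
  by rewrite rnp.
have dp0 : (0 < d * p)%N by rewrite muln_gt0 d0 prime_gt0.
have [sq | nsq] := boolP [exists r : 'I_d.+1, prime r && (r * r %| d)%N].
  move: (sq) => /(sqP d0) [r /andP [rp rd]].
  rewrite /mobius (negPf (lt0n_neq0 d0)) (negPf (lt0n_neq0 dp0)) sq /=.
  case: (sqP dp0) => [_|[]]; first by rewrite oppr0.
  by exists r; rewrite rp dvdn_mulr.
have H1 : forall r, prime r -> ~~ (r * r %| d)%N.
  move=> r rp; apply/negP => rd; move/negP: nsq; apply; apply/(sqP d0).
  by exists r; rewrite rp.
rewrite (mob_sqf d0 H1) (mob_sqf dp0); last first.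
  by move=> r rp; apply/negP => /(key r rp); apply/negP/H1.
by rewrite size_primesMp // exprS mulN1r.
Qed.

Lemma lcm_mulp x p e : prime p -> (p %| e)%N -> ~~ (p %| x)%N ->
  lcmn (x * p) e = lcmn x e.
Proof.
move=> pp pe px.
have cop : coprime x p by rewrite coprime_sym prime_coprime.
have -> : (x * p = lcmn x p)%N by rewrite /lcmn (eqP cop) divn1.
by rewrite -lcmnA (lcmn_idPr pe).
Qed.

Definition sig (p d : nat) := if (p %| d)%N then (d %/ p)%N else (d * p)%N.

Lemma sig_props n p d : prime p -> (p %| n)%N -> (d %| n)%N -> mobius d != 0 ->
  [/\ (sig p d %| n)%N, mobius (sig p d) = - mobius d, sig p (sig p d) = d
    & forall e, (p %| e)%N -> lcmn (sig p d) e = lcmn d e].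
Proof.
move=> pp pn dn md; have d0 := mob_gt0 md; rewrite /sig.
have [pd|pd] := boolP (p %| d)%N.
  have dE := divnK pd; set d' := (d %/ p)%N in dE *; clearbody d'.
  have pd' : ~~ (p %| d')%N.
    apply/negP => H; move: (mob_sq md pp); rewrite -dE dvdn_pmul2r ?prime_gt0 //.
    by rewrite H.
  have d'0 : (0 < d')%N by move: d0; rewrite -dE muln_gt0 => /andP [].
  split.
  - by apply: dvdn_trans dn; rewrite -dE dvdn_mulr.
  - by rewrite -dE mob_mulp // opprK.
  - by rewrite (negPf pd') dE.
  - by move=> e pe; rewrite -dE lcm_mulp.
have dp0 : (0 < d * p)%N by rewrite muln_gt0 d0 prime_gt0.
split.
- by rewrite Gauss_dvd ?dn // coprime_sym prime_coprime.
- by rewrite mob_mulp.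
- by rewrite dvdn_mull // mulnK // prime_gt0.
- by move=> e pe; rewrite lcm_mulp.
Qed.

Lemma mob_pair_big (R : Type) (idx : R) (op : Monoid.com_law idx) n p (G : nat -> R) :
  (0 < n)%N -> prime p -> (p %| n)%N ->
  (forall d, (d %| n)%N -> mobius d != 0 -> G (sig p d) = G d) ->
  \big[op/idx]_(d <- divisors n | mobius d == 1) G d =
  \big[op/idx]_(d <- divisors n | mobius d == -1) G d.
Proof.
move=> n0 pp pn HG.
set s1 := [seq d <- divisors n | mobius d == 1].
set s2 := [seq d <- divisors n | mobius d == -1].
suff H : \big[op/idx]_(d <- s1) G d = \big[op/idx]_(d <- s2) G d.
  by rewrite !big_filter in H.
have m1 : forall x, (x \in s1) = (x %| n)%N && (mobius x == 1).
  by move=> x; rewrite mem_filter -dvdn_divisors // andbC.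
have m2 : forall x, (x \in s2) = (x %| n)%N && (mobius x == -1).
  by move=> x; rewrite mem_filter -dvdn_divisors // andbC.
have nz1 : forall x, mobius x == 1 -> mobius x != 0 by move=> x /eqP ->.
have nz2 : forall x, mobius x == -1 -> mobius x != 0 by move=> x /eqP ->.
have pe : perm_eq (map (sig p) s1) s2.
  apply: uniq_perm.
  - rewrite map_inj_in_uniq ?filter_uniq ?divisors_uniq //.
    move=> x y; rewrite !m1 => /andP [xn /nz1 mx] /andP [yn /nz1 my] E.
    have [_ _ <- _] := sig_props pp pn xn mx.
    by have [_ _ <- _] := sig_props pp pn yn my; rewrite E.
  - by rewrite filter_uniq ?divisors_uniq.
  move=> x; apply/mapP/idP => [[y]|].
    rewrite m1 => /andP [yn my] ->; have [H1 H2 _ _] := sig_props pp pn yn (nz1 _ my).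
    by rewrite m2 H1 H2 (eqP my).
  rewrite m2 => /andP [xn mx]; have [H1 H2 H3 _] := sig_props pp pn xn (nz2 _ mx).
  by exists (sig p x); rewrite // m1 H1 H2 (eqP mx) opprK.
rewrite -(perm_big _ pe) big_map; apply: eq_big_seq => x; rewrite m1 => /andP [xn mx].
by rewrite HG // nz1.
Qed.

Definition ev (f : {poly int}) (z : algC) : algC := (map_poly intr f).[z].

Lemma ev_subs f d z : ev (subs_pow f d) z = ev f (z ^+ d).
Proof. by rewrite /ev /subs_pow map_comp_poly horner_comp rmorphXn /= map_polyX hornerXn. Qed.

Lemma ev_prod (I : Type) (s : seq I) (P : pred I) (F : I -> {poly int}) z :
  ev (\prod_(i <- s | P i) F i) z = \prod_(i <- s | P i) ev (F i) z.
Proof. by rewrite /ev rmorph_prod horner_prod. Qed.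

Lemma ev_sum (I : Type) (s : seq I) (P : pred I) (F : I -> {poly int}) z :
  ev (\sum_(i <- s | P i) F i) z = \sum_(i <- s | P i) ev (F i) z.
Proof. by rewrite /ev rmorph_sum horner_sum. Qed.

Lemma ev_scale (c : int) f z : ev (c%:~R *: f) z = c%:~R * ev f z.
Proof. by rewrite /ev -mul_polyC rmorphM /= hornerM map_polyC /= hornerC intz. Qed.

Lemma ev1 f : ev f 1 = (f.[1])%:~R.
Proof. by rewrite /ev -horner_map /= rmorph1. Qed.

Lemma ev_B f g z : ev (f - g) z = ev f z - ev g z.
Proof. by rewrite /ev rmorphB hornerD hornerN. Qed.

Lemma ev_M f g z : ev (f * g) z = ev f z * ev g z.
Proof. by rewrite /ev rmorphM hornerM. Qed.

Lemma mob1_size d : mobius d = 1 -> d != 1%N -> (1 < size (primes d))%N.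
Proof.
move=> md d1; have mn : mobius d != 0 by rewrite md.
have d0 := mob_gt0 mn; move: md; rewrite (mob_val mn).
case E: (size (primes d)) => [|[|k]] //.
  move=> _; move/size0nil: E => E.
  have d2 : (1 < d)%N by rewrite ltn_neqAle eq_sym d1 d0.
  have : pdiv d \in primes d by rewrite mem_primes pdiv_prime // d0 pdiv_dvd.
  by rewrite E.
Qed.

Lemma C_nz (a : nat -> {poly int}) N n e d :
  (0 < N)%N ->
  (forall d : nat, d \in divisors N -> ~~ is_prime_power (N %/ d)%N ->
     (a d).[1] != 0) ->
  (n %| N)%N -> (e %| n)%N -> (d %| n)%N -> mobius d = 1 -> d != 1%N ->
  (a (n %/ lcmn d e)%N).[1] != 0.
Proof.
move=> N0 Hyp nN en dn md d1.
have n0 : (0 < n)%N by apply: dvdn_gt0 nN.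
set L := lcmn d e; set m := (n %/ L)%N.
have Ln : (L %| n)%N by rewrite dvdn_lcm dn en.
have mn : (m %| n)%N by apply: dvdn_div.
have mN : (m %| N)%N by apply: dvdn_trans nN.
have m0 : (0 < m)%N by apply: dvdn_gt0 mN.
apply: Hyp; first by rewrite -dvdn_divisors.
rewrite /is_prime_power negb_and -ltnNge; apply/orP; right.
rewrite -ltnNge; apply: leq_trans (mob1_size md d1) _.
have dNm : (d %| N %/ m)%N.
  rewrite dvdn_divRL //; apply: dvdn_trans nN.
  have <- : (m * L = n)%N by rewrite /m divnK.
  by rewrite mulnC dvdn_mul // dvdn_lcml.
have Nm0 : (0 < N %/ m)%N by rewrite divn_gt0 // dvdn_leq.
apply: uniq_leq_size; first exact: primes_uniq.
move=> x; rewrite !mem_primes Nm0 => /and3P [-> _ xd] /=.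
exact: dvdn_trans xd dNm.
Qed.

Lemma U (a : nat -> {poly int}) N n e d (z : algC) :
  (0 < n)%N -> (n %| N)%N -> (e %| n)%N -> e.-primitive_root z ->
  (d %| n)%N -> (1 < d)%N ->
  (forall m e' (w : algC), (m < n)%N -> (m %| N)%N -> (e' %| m)%N -> (1 < e')%N ->
      e'.-primitive_root w -> ev (a m) w = ((a (m %/ e')%N).[1])%:~R) ->
  ev (a (n %/ d)%N) (z ^+ d) = ((a (n %/ lcmn d e)%N).[1])%:~R.
Proof.
move=> n0 nN en pz dn d1 IH.
have e0 := prim_order_gt0 pz.
have [ed|ned] := boolP (e %| d)%N.
  rewrite (lcmn_idPl ed).
  have -> : z ^+ d = 1 by apply/eqP; rewrite -(prim_order_dvd pz).
  exact: ev1.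
set g := gcdn d e.
have pz' := exp_prim_root pz d.
have ge : (g %| e)%N by apply: dvdn_gcdr.
have gd : (g %| d)%N by apply: dvdn_gcdl.
have g0 : (0 < g)%N by rewrite gcdn_gt0 e0 orbT.
have L : lcmn d e = (d * (e %/ g))%N by rewrite /lcmn muln_divA.
have Ln : (lcmn d e %| n)%N by rewrite dvdn_lcm dn en.
have e'1 : (1 < e %/ g)%N.
  rewrite ltn_neqAle divn_gt0 // dvdn_leq // andbT.
  apply/negP => /eqP E; move/negP: ned; apply.
  have : (e = g)%N by rewrite -(divnK ge) -E mul1n.
  by move=> ->.
rewrite (IH (n %/ d)%N (e %/ g)%N (z ^+ d)) //.
- by rewrite -divnMA -L.
- by rewrite ltn_Pdiv.
- by apply: dvdn_trans nN; apply: dvdn_div.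
- by rewrite dvdn_divRL // mulnC -L.
Qed.

Lemma claim (a : nat -> {poly int}) N :
  qEulerGauss a -> (0 < N)%N ->
  (forall d : nat, d \in divisors N -> ~~ is_prime_power (N %/ d)%N ->
     (a d).[1] != 0) ->
  forall n e (z : algC), (n %| N)%N -> (e %| n)%N -> (1 < e)%N ->
      e.-primitive_root z -> ev (a n) z = ((a (n %/ e)%N).[1])%:~R.
Proof.
move=> EG N0 Hyp n; elim/ltn_ind: n => n IH e z nN en e1 pz.
have n0 : (0 < n)%N by apply: dvdn_gt0 nN.
have zn : z ^+ n = 1 by apply/eqP; rewrite -(prim_order_dvd pz).
have z1 : z != 1.
  by apply/negP => /eqP z1; move: (prim_order_dvd pz 1); rewrite z1 expr1n eqxx dvdn1 => /eqP E; rewrite E in e1.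
have [r Er] := EG n n0.
have := congr1 (fun f => ev f z) Er; rewrite /= ev_M /ev qint_root // mulr0.
rewrite -/(ev _ z) ev_B => /eqP; rewrite subr_eq0 => /eqP; rewrite !ev_prod.
under eq_bigr do rewrite ev_subs.
under [X in _ = X]eq_bigr do rewrite ev_subs.
set C := fun d => ((a (n %/ lcmn d e)%N).[1])%:~R : algC.
have VC : forall d, d \in divisors n -> d != 1%N -> ev (a (n %/ d)%N) (z ^+ d) = C d.
  move=> d; rewrite -dvdn_divisors // => dn dn1.
  have d0 : (0 < d)%N by apply: dvdn_gt0 dn.
  apply: (U (N := N)) => //; first by rewrite ltn_neqAle eq_sym dn1 d0.
  by move=> m e' w mn; apply: IH.
rewrite -/(ev (a n) z) => H.
have m1 : mobius 1 = 1 by rewrite mob_sqf // => p pp; rewrite dvdn1 muln_eq1 andbb; apply/negP => /eqP p1; rewrite p1 in pp.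
have pp : prime (pdiv e) by apply: pdiv_prime.
have pe : (pdiv e %| e)%N by apply: pdiv_dvd.
have pn : (pdiv e %| n)%N by apply: dvdn_trans en.
have PC : \prod_(i <- divisors n | mobius i == 1) C i = \prod_(i <- divisors n | mobius i == -1) C i.
  apply: (@mob_pair_big algC 1 *%R n (pdiv e) C n0 pp pn) => d dn md.
  have [_ _ _ H4] := sig_props pp pn dn md.
  by rewrite /C H4.
have R : \prod_(i <- divisors n | mobius i == -1) ev (a (n %/ i)%N) (z ^+ i) =
         \prod_(i <- divisors n | mobius i == -1) C i.
  rewrite big_seq_cond [RHS]big_seq_cond; apply: eq_bigr => d /andP [dD /eqP md].
  by rewrite VC // ; apply/eqP => d1; rewrite d1 m1 in md.
have D : forall F : nat -> algC, \prod_(i <- divisors n | mobius i == 1) F i =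
    F 1%N * \prod_(i <- divisors n | i != 1%N) (if mobius i == 1 then F i else 1).
  by move=> F; rewrite big_mkcond (bigD1_seq 1%N) ?divisor1 ?divisors_uniq //= m1 eqxx.
rewrite R !D in H PC.
set X := \prod_(i <- divisors n | i != 1%N) (if mobius i == 1 then C i else 1) in PC.
have XV : \prod_(i <- divisors n | i != 1%N) (if mobius i == 1 then ev (a (n %/ i)%N) (z ^+ i) else 1) = X.
  rewrite /X big_seq_cond [RHS]big_seq_cond; apply: eq_bigr => d /andP [dD d1].
  by rewrite VC.
have X0 : X != 0.
  rewrite prodf_seq_neq0; apply/allP => d dD; apply/implyP => d1.
  case: ifP => [/eqP md|_]; last exact: oner_neq0.
  rewrite /C intr_eq0; apply: (C_nz N0 Hyp nN en) => //.
  by rewrite dvdn_divisors.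
rewrite XV -PC divn1 expr1 in H.
move/(mulIf X0): H => ->.
by rewrite /C lcm1n.
Qed.

Theorem theorem11 (a : nat -> {poly int}) (N : nat) :
  qEulerGauss a -> (0 < N)%N ->
  (forall d : nat, d \in divisors N -> ~~ is_prime_power (N %/ d)%N ->
     (a d).[1] != 0) ->
  zdvdp (qint N)
    (\sum_(d <- divisors N) (mobius d)%:~R *: subs_pow (a (N %/ d)%N) d).
Proof.
move=> EG N0 Hyp; apply: (dvd_crit N0) => z zN z1.
have [e pz eN] := prim_order_exists N0 zN.
have e0 := prim_order_gt0 pz.
have e1 : (1 < e)%N.
  rewrite ltn_neqAle e0 andbT; apply/negP => /eqP E.
  by move: (prim_expr_order pz); rewrite -E expr1 => E1; rewrite E1 eqxx in z1.
rewrite -/(ev _ z) ev_sum.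
under eq_bigr do rewrite ev_scale ev_subs.
set C := fun d => ((a (N %/ lcmn d e)%N).[1])%:~R : algC.
have VC : forall d, d \in divisors N -> ev (a (N %/ d)%N) (z ^+ d) = C d.
  move=> d; rewrite -dvdn_divisors // => dN.
  have d0 : (0 < d)%N by apply: dvdn_gt0 dN.
  have [->|d1] := eqVneq d 1%N.
    by rewrite divn1 expr1 (claim EG N0 Hyp (dvdnn N) eN e1 pz) /C lcm1n.
  apply: (U (N := N)) => //; first by rewrite ltn_neqAle eq_sym d1 d0.
  by move=> m e' w mn mN; apply: (claim EG N0 Hyp).
rewrite big_seq; under eq_bigr => d dD do rewrite VC //; rewrite -big_seq.
have -> : \sum_(d <- divisors N) (mobius d)%:~R * C d =
    \sum_(d <- divisors N | mobius d == 1) C d - \sum_(d <- divisors N | mobius d == -1) C d.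
  rewrite [in RHS]big_mkcond [X in _ - X]big_mkcond -sumrB; apply: eq_bigr => d _.
  have [->|mn] := eqVneq (mobius d) 0; first by rewrite mul0r subr0.
  rewrite (mob_val mn) -signr_odd; case: (odd _) => /=.
    by rewrite expr1 mulN1r sub0r.
  by rewrite expr0 mul1r subr0.
have pp : prime (pdiv e) by apply: pdiv_prime.
have pN : (pdiv e %| N)%N by apply: dvdn_trans eN; apply: pdiv_dvd.
rewrite (@mob_pair_big algC 0 +%R N (pdiv e) C N0 pp pN) ?subrr //.
move=> d dN md; have [_ _ _ H4] := sig_props pp pN dN md.
by rewrite /C H4 // pdiv_dvd.
Qed.
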